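(* Let $n\ge 2$, let $\mathcal{S}\subseteq(\mathbb{C}^d)^{\otimes n}$ be the permutation-symmetric subspace, and let $|\psi\rangle,|\varphi\rangle\in\mathcal{S}$ be such that $A_1\otimes\cdots\otimes A_n|\psi\rangle=|\varphi\rangle$ for some invertible $d\times d$ matrices $A_1,\ldots,A_n$. Then there is an invertible $d\times d$ matrix $A$ such that for every $d\times d$ matrix $B$ with $B_{(1)}|\psi\rangle\in\mathcal{S}$ one has $(ABA^{-1})_{(1)}|\varphi\rangle\in\mathcal{S}$, and for every $B'$ with $B'_{(1)}|\varphi\rangle\in\mathcal{S}$ one has $(A^{-1}B'A)_{(1)}|\psi\rangle\in\mathcal{S}$. In particular, the set of Jordan normal forms of matrices $B$ with $B_{(1)}|\psi\rangle\in\mathcal{S}$ coincides with that for $|\varphi\rangle$.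
   Context: $\mathcal{S}$ is the set of vectors in $(\mathbb{C}^d)^{\otimes n}$ invariant under all permutations of the $n$ tensor factors. For a $d\times d$ matrix $Y$, $Y_{(1)}$ denotes $Y\otimes\mathbb{I}\otimes\cdots\otimes\mathbb{I}$ on $(\mathbb{C}^d)^{\otimes n}$. *)

(* Defs.v *)
From HB Require Import structures.
From mathcomp Require Import all_boot all_order all_algebra all_fingroup.
Set Implicit Arguments. Unset Strict Implicit. Unset Printing Implicit Defensive.
Import Order.TTheory GRing.Theory Num.Theory.
Local Open Scope ring_scope.

(* Basis index of (C^d)^{⊗n}: a multi-index i : 'I_n -> 'I_d. *)
Definition mindex (n d : nat) := {ffun 'I_n -> 'I_d}.

(* Vectors of (C^d)^{⊗n}, given by their coordinates in the product basis. *)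
Definition tensor (C : Type) (n d : nat) := mindex n d -> C.

Definition permute_index (n d : nat) (s : 'S_n) (i : mindex n d) : mindex n d :=
  [ffun k => i (s k)].

Definition symmetric_tensor (C : Type) (n d : nat) (v : tensor C n d) : Prop :=
  forall (s : 'S_n) (i : mindex n d), v (permute_index s i) = v i.

Definition tensor_prod_apply (C : comRingType) (n d : nat)
    (A : 'I_n -> 'M[C]_d) (v : tensor C n d) : tensor C n d :=
  fun i => \sum_(j : mindex n d) (\prod_(k < n) A k (i k) (j k)) * v j.

(* Y_(k) = I ⊗ ... ⊗ Y (at position k) ⊗ ... ⊗ I applied to a tensor. *)
Definition apply_at (C : ringType) (n d : nat) (k : 'I_n)
    (Y : 'M[C]_d) (v : tensor C n d) : tensor C n d :=
  fun i => \sum_(a < d) Y (i k) a * v [ffun l => if l == k then a else i l].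

(* Main.v *)
Require Import Defs.
From HB Require Import structures.
From mathcomp Require Import all_boot all_order all_algebra all_fingroup.
From mathcomp Require Import ring.
Import Order.TTheory GRing.Theory Num.Theory.
Local Open Scope ring_scope.

Lemma hensel (C : numClosedFieldType) (n : nat) (lam : C) : (0 < n)%N -> lam != 0 ->
  forall m, exists p : {poly C}, ('X - lam%:P)^+m %| p^+n - 'X.
Proof.
move=> n0 l0; elim=> [|m IH]; first by exists 0; rewrite expr0 dvd1p.
case: m IH => [|m] [p Hp].
  exists (n.-root lam)%:P; rewrite expr1 dvdp_XsubCl /root !hornerE.
  by rewrite rootCK // subrr.
set q := ('X - lam%:P).
have Hq : q %| p^+n - 'X by apply: dvdp_trans Hp; rewrite -{1}(expr1 q) dvdp_exp2l.
move: Hq; rewrite dvdp_XsubCl /root !hornerE subr_eq0 => /eqP pl.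
have pl0 : p.[lam] != 0.
  by apply: contraNneq l0 => h; rewrite -pl h expr0n eqn0Ngt n0.
have [r Hr] := dvdpP _ _ Hp.
set c := - r.[lam] / (n%:R * p.[lam]^+n.-1).
set p' := p + c%:P * q^+m.+1.
set S := \sum_(i < n) p' ^+ (n.-1 - i) * p ^+ i.
have E : p'^+n - 'X = q^+m.+1 * (r + c%:P * S).
  have -> : p'^+n - 'X = (p'^+n - p^+n) + (p^+n - 'X) by rewrite addrA subrK.
  rewrite subrXX -/S Hr /p' addrAC subrr add0r; ring.
exists p'; rewrite E exprSr dvdp_mul2l; last by rewrite expf_neq0 // polyXsubC_eq0.
rewrite dvdp_XsubCl /root.
have p'l : p'.[lam] = p.[lam] by rewrite /p' !hornerE subrr expr0n /= mulr0 addr0.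
rewrite hornerD hornerM hornerC /S horner_sum.
rewrite (eq_bigr (fun _ => p.[lam] ^+ n.-1)); last first.
  move=> i _; rewrite hornerM !horner_exp p'l -exprD subnK //.
  by rewrite -ltnS prednK.
rewrite sumr_const card_ord /c -mulr_natr.
apply/eqP; field.
by rewrite expf_neq0 // pnatr_eq0 -lt0n.

Qed.

Lemma dvd_powdiff (C : numClosedFieldType) (n : nat) (a p p1 f : {poly C}) :
  a %| p - p1 -> a %| p1^+n - f -> a %| p^+n - f.
Proof.
move=> h1 h2.
have -> : p^+n - f = (p^+n - p1^+n) + (p1^+n - f) by rewrite addrA subrK.
by apply: dvdp_add => //; rewrite subrXX; apply: dvdp_mulr.
Qed.

Lemma crt_root (C : numClosedFieldType) (n : nat) (a b p1 p2 f : {poly C}) :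
  coprimep a b -> a %| p1^+n - f -> b %| p2^+n - f -> exists p, a * b %| p^+n - f.
Proof.
move=> /Bezout_eq1_coprimepP [[u v] /= Hu] h1 h2.
have hb : v * b = 1 - u * a by rewrite -Hu [u * a + _]addrC addrK.
have ha : u * a = 1 - v * b by rewrite -Hu addrK.
exists (p1 * (v * b) + p2 * (u * a)).
rewrite Gauss_dvdp; last by apply/Bezout_eq1_coprimepP; exists (u, v).
apply/andP; split.
  apply: (@dvd_powdiff _ _ _ _ p1) => //.
  have -> : p1 * (v * b) + p2 * (u * a) - p1 = ((p2 - p1) * u) * a by rewrite hb; ring.
  by apply: dvdp_mull; apply: dvdpp.
apply: (@dvd_powdiff _ _ _ _ p2) => //.
have -> : p1 * (v * b) + p2 * (u * a) - p2 = ((p1 - p2) * v) * b by rewrite ha; ring.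
by apply: dvdp_mull; apply: dvdpp.
Qed.

Lemma poly_nroot (C : numClosedFieldType) (n : nat) : (0 < n)%N ->
  forall g : {poly C}, g != 0 -> ~~ root g 0 -> exists p, g %| p^+n - 'X.
Proof.
move=> n0 g; have [k Hk] := ubnP (size g); elim: k g Hk => // k IH g Hk g0 r0.
have [/eqP/size_poly1P [c c0 ->] | s1] := eqVneq (size g) 1%N.
  exists 0; apply/dvdpP; exists ((0 ^+ n - 'X) * (c^-1)%:P).
  by rewrite -mulrA -polyCM mulVf // mulr1.
have [lam rl] := closed_rootP _ s1.
have l0 : lam != 0 by apply: contraNneq r0 => <-.
have [m [g' Hg' Eg]] := multiplicity_XsubC g lam.
move: Hg'; rewrite g0 /= => Hg'.
have g'0 : g' != 0 by apply: contraNneq g0 => h; rewrite Eg h mul0r.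
have m0 : (0 < m)%N.
  case: m Eg => // Eg; move: rl; rewrite Eg expr0 mulr1 => rl.
  by rewrite rl in Hg'.
have sz : (size g' < k)%N.
  rewrite -ltnS; apply: leq_trans Hk; rewrite ltnS Eg size_Mmonic ?monic_exp ?monicXsubC //.

  rewrite size_exp_XsubC addnS /= -addn1 leq_add2l //.
have r0' : ~~ root g' 0.
  by apply: contra r0; rewrite Eg rootM => ->.
have [p2 H2] := IH g' sz g'0 r0'.
have [p1 H1] := @hensel C n lam n0 l0 m.
have cop : coprimep g' (('X - lam%:P)^+m) by apply: coprimep_expr; rewrite coprimep_XsubC.
have [p Hp] := @crt_root C n _ _ _ _ _ cop H2 H1.
by exists p; rewrite Eg.
Qed.

Lemma mx_nroot (C : numClosedFieldType) (n d : nat) (D : 'M[C]_d) :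
  (0 < n)%N -> D \in unitmx ->
  exists R : 'M[C]_d, R ^+ n = D /\
    exists m (c : 'I_m -> C), R = \sum_(i < m) c i *: D ^+ i.
Proof.
case: d D => [|d] D n0 uD.
  by exists 0; split; [rewrite flatmx0 [D]flatmx0 | exists 0%N, (fun _ => 0); rewrite big_ord0].
have g0 : char_poly D != 0 by rewrite monic_neq0 // char_poly_monic.
have r0 : ~~ root (char_poly D) 0.
  rewrite /root horner_coef0 char_poly_det mulf_eq0 negb_or signr_eq0 /=.
  by rewrite -unitfE -unitmxE.
have [p Hp] := @poly_nroot C n n0 _ g0 r0.
exists (horner_mx D p); split.
  have [q Hq] := dvdpP _ _ Hp.
  have := congr1 (horner_mx D) Hq.
  rewrite rmorphM /= Cayley_Hamilton mulr0 rmorphB rmorphXn /= horner_mx_X.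
  by move/eqP; rewrite subr_eq0 => /eqP.
exists (size p), (fun i => p`_i).
rewrite -{1}[p]coefK poly_def raddf_sum; apply: eq_bigr => i _.
change (horner_mx D (p`_i *: 'X^i) = p`_i *: D ^+ i).
by rewrite horner_mxZ rmorphXn /= horner_mx_X.
Qed.
From Stdlib Require Import FunctionalExtensionality.

Lemma tpa_comp (C : comRingType) n d (A B : 'I_n -> 'M[C]_d) (v : tensor C n d) :
  tensor_prod_apply A (tensor_prod_apply B v) =
  tensor_prod_apply (fun k => A k *m B k) v.
Proof.
apply: functional_extensionality_dep => i; rewrite /tensor_prod_apply.
under eq_bigr => j _ do rewrite big_distrr /=.
rewrite exchange_big /=; apply: eq_bigr => l _.
under eq_bigr => j _ do rewrite mulrA.
rewrite -mulr_suml; congr (_ * _).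
rewrite (eq_bigr (fun j : mindex n d => \prod_(k<n) (A k (i k) (j k) * B k (j k) (l k)))); last first.
  by move=> j _; rewrite big_split.
rewrite [RHS](eq_bigr (fun k => \sum_a A k (i k) a * B k a (l k))); last first.
  by move=> k _; rewrite mxE.
rewrite (bigA_distr_bigA (fun k a => A k (i k) a * B k a (l k))).
by [].
Qed.

Lemma tpa_id (C : comRingType) n d (v : tensor C n d) :
  tensor_prod_apply (fun _ => 1%:M) v = v.
Proof.
apply: functional_extensionality_dep => i; rewrite /tensor_prod_apply.
rewrite (bigD1 i) //= [X in _ + X]big1 ?addr0.
  by rewrite big1 ?mul1r // => k _; rewrite mxE eqxx.
move=> j ji.
have [k kj] : exists k, i k != j k.
  apply/existsP; apply: contraNT ji; rewrite negb_exists => /forallP H.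
  by apply/eqP/ffunP => k; move: (H k); rewrite negbK => /eqP ->.
by rewrite (bigD1 k) //= mxE (negbTE kj) mulr0n mul0r mul0r.
Qed.

Definition ptens {C : Type} {n d} (s : 'S_n) (v : tensor C n d) : tensor C n d :=
  fun i => v (permute_index s i).

Lemma permute_indexK {n d} (s : 'S_n) (i : mindex n d) :
  permute_index s (permute_index (s^-1)%g i) = i.
Proof. by apply/ffunP => k; rewrite !ffunE permK. Qed.

Lemma permute_index_inj n d (s : 'S_n) : injective (@permute_index n d s).
Proof.
move=> i j h; rewrite -(permute_indexK (s^-1)%g i) -(permute_indexK (s^-1)%g j) invgK.
by rewrite h.
Qed.

Lemma tpa_perm (C : comRingType) n d (s : 'S_n) (A : 'I_n -> 'M[C]_d) (v : tensor C n d) :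
  ptens s (tensor_prod_apply A v) =
  tensor_prod_apply (fun k => A ((s^-1)%g k)) (ptens s v).
Proof.
apply: functional_extensionality_dep => i; rewrite /tensor_prod_apply /ptens.
rewrite [RHS](reindex_inj (@permute_index_inj n d (s^-1)%g)) /=.
apply: eq_bigr => j _; rewrite permute_indexK; congr (_ * _).
rewrite [RHS](reindex_inj (@perm_inj _ s)) /=.
by apply: eq_bigr => k _; rewrite !ffunE permK.
Qed.

Definition ek {C : comRingType} {n d} (k : 'I_n) (Y : 'M[C]_d) : 'I_n -> 'M[C]_d :=
  fun l => if l == k then Y else 1%:M.

Lemma apply_atE (C : comRingType) n d (k : 'I_n) (Y : 'M[C]_d) (v : tensor C n d) :
  apply_at k Y v = tensor_prod_apply (ek k Y) v.
Proof.
apply: functional_extensionality_dep => i; rewrite /tensor_prod_apply /apply_at.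
rewrite (partition_big (fun j : mindex n d => j k) predT) //=.
apply: eq_bigr => a _.
set u : mindex n d := [ffun l => if l == k then a else i l].
rewrite (bigD1 u) /=; last by rewrite ffunE eqxx.
rewrite [X in _ + X]big1 ?addr0.
  congr (_ * _); rewrite (bigD1 k) //= big1 ?mulr1.
    by rewrite /ek eqxx ffunE eqxx.
  by move=> l lk; rewrite /ek (negbTE lk) ffunE (negbTE lk) mxE eqxx.
move=> j /andP [/eqP jk ju].
have [l lj] : exists l, j l != u l.
  apply/existsP; apply: contraNT ju; rewrite negb_exists => /forallP H.
  by apply/eqP/ffunP => l; move: (H l); rewrite negbK => /eqP ->.
have lk : l != k by apply: contraNneq lj => ->; rewrite jk ffunE eqxx.
move: lj; rewrite ffunE (negbTE lk) => lj.
by rewrite (bigD1 l) //= /ek (negbTE lk) mxE eq_sym (negbTE lj) mulr0n mul0r mul0r.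
Qed.

Lemma symP (C : Type) n d (v : tensor C n d) :
  symmetric_tensor v <-> forall s, ptens s v = v.
Proof.
split=> [H s | H s i]; first by apply: functional_extensionality_dep => i; apply: H.
exact: (congr1 (fun f => f i) (H s)).
Qed.

Lemma tpa_ext (C : comRingType) n d (A B : 'I_n -> 'M[C]_d) (v : tensor C n d) :
  (forall l, A l = B l) -> tensor_prod_apply A v = tensor_prod_apply B v.
Proof. by move=> h; have -> : A = B by apply: functional_extensionality_dep. Qed.

Lemma const_sym (C : comRingType) n d (G : 'M[C]_d) (v : tensor C n d) :
  symmetric_tensor v -> symmetric_tensor (tensor_prod_apply (fun _ => G) v).
Proof.
move=> /symP H; apply/symP => s; rewrite tpa_perm H.
by apply: tpa_ext.
Qed.

Lemma ek_perm (C : comRingType) n d (s : 'S_n) k (Y : 'M[C]_d) l :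
  ek k Y ((s^-1)%g l) = ek (s k) Y l.
Proof. by rewrite /ek -(inj_eq (@perm_inj _ s)) permKV. Qed.

Lemma symE (C : comRingType) n d (k0 : 'I_n) (B : 'M[C]_d) (v : tensor C n d) :
  symmetric_tensor v ->
  (symmetric_tensor (tensor_prod_apply (ek k0 B) v) <->
   forall k, tensor_prod_apply (ek k B) v = tensor_prod_apply (ek k0 B) v).
Proof.
move=> /symP Hv; split.
  move=> /symP H k; rewrite -[RHS](H (tperm k0 k)) tpa_perm Hv.
  by apply: tpa_ext => l; rewrite ek_perm tpermL.
move=> H; apply/symP => s; rewrite tpa_perm Hv -[RHS](H (s k0)).
by apply: tpa_ext => l; rewrite ek_perm.
Qed.

Lemma absorb1 (C : comRingType) n d (k k0 : 'I_n) (X : 'I_n -> 'M[C]_d) (Y : 'M[C]_d)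
  (v : tensor C n d) :
  tensor_prod_apply (ek k Y) v = tensor_prod_apply (ek k0 Y) v ->
  tensor_prod_apply (fun l => X l *m ek k Y l) v =
  tensor_prod_apply (fun l => X l *m ek k0 Y l) v.
Proof. by move=> H; rewrite -!tpa_comp H. Qed.

Definition Mrel {C : comRingType} {n d} (k0 : 'I_n) (v : tensor C n d) (Y : 'M[C]_d) :=
  forall k, tensor_prod_apply (ek k Y) v = tensor_prod_apply (ek k0 Y) v.

Lemma ek1 (C : comRingType) n d (k : 'I_n) l : ek k (1%:M : 'M[C]_d) l = 1%:M.
Proof. by rewrite /ek; case: eqP. Qed.

Lemma Mrel1 (C : comRingType) n d k0 (v : tensor C n d) : Mrel k0 v 1%:M.
Proof. by move=> k; apply: tpa_ext => l; rewrite !ek1. Qed.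

Lemma ek_mul (C : comRingType) n d (k : 'I_n) (Y Z : 'M[C]_d) (v : tensor C n d) :
  tensor_prod_apply (ek k Y) (tensor_prod_apply (ek k Z) v) =
  tensor_prod_apply (ek k (Y *m Z)) v.
Proof. by rewrite tpa_comp; apply: tpa_ext => l; rewrite /ek; case: eqP => // _; rewrite mul1mx. Qed.

Lemma ek_comm (C : comRingType) n d (k k' : 'I_n) (Y Z : 'M[C]_d) (v : tensor C n d) :
  k != k' ->
  tensor_prod_apply (ek k Y) (tensor_prod_apply (ek k' Z) v) =
  tensor_prod_apply (ek k' Z) (tensor_prod_apply (ek k Y) v).
Proof.
move=> kk; rewrite !tpa_comp; apply: tpa_ext => l; rewrite /ek.
case: (eqVneq l k) => [->|lk]; first by rewrite (negbTE kk) mulmx1 mul1mx.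
by case: eqP => _; rewrite ?mulmx1 ?mul1mx.
Qed.

Lemma Mrel_mul (C : comRingType) n d k0 (v : tensor C n d) (Y Z : 'M[C]_d) :
  Mrel k0 v Y -> Mrel k0 v Z -> Y *m Z = Z *m Y -> Mrel k0 v (Y *m Z).
Proof.
move=> HY HZ HYZ k; case: (eqVneq k k0) => [->//|kk].
rewrite -ek_mul HZ ek_comm // HY ek_mul -HYZ.
by [].
Qed.

Lemma apply_atD (C : comRingType) n d (k : 'I_n) (Y Z : 'M[C]_d) (v : tensor C n d) i :
  apply_at k (Y + Z) v i = apply_at k Y v i + apply_at k Z v i.
Proof. by rewrite /apply_at -big_split; apply: eq_bigr => a _; rewrite mxE mulrDl. Qed.

Lemma apply_atZ (C : comRingType) n d (k : 'I_n) c (Y : 'M[C]_d) (v : tensor C n d) i :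
  apply_at k (c *: Y) v i = c * apply_at k Y v i.
Proof. by rewrite /apply_at mulr_sumr; apply: eq_bigr => a _; rewrite mxE mulrA. Qed.

Lemma apply_at0 (C : comRingType) n d (k : 'I_n) (v : tensor C n d) i :
  apply_at k (0 : 'M[C]_d) v i = 0.
Proof. by rewrite /apply_at big1 // => a _; rewrite mxE mul0r. Qed.

Lemma Mrel_add (C : comRingType) n d k0 (v : tensor C n d) (Y Z : 'M[C]_d) :
  Mrel k0 v Y -> Mrel k0 v Z -> Mrel k0 v (Y + Z).
Proof.
move=> HY HZ k; rewrite -!apply_atE; apply: functional_extensionality_dep => i.
by rewrite !apply_atD !apply_atE HY HZ.
Qed.

Lemma Mrel_scale (C : comRingType) n d k0 (v : tensor C n d) c (Y : 'M[C]_d) :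
  Mrel k0 v Y -> Mrel k0 v (c *: Y).
Proof.
move=> HY k; rewrite -!apply_atE; apply: functional_extensionality_dep => i.
by rewrite !apply_atZ !apply_atE HY.
Qed.

Lemma Mrel_0 (C : comRingType) n d k0 (v : tensor C n d) : Mrel k0 v (0 : 'M[C]_d).
Proof.
move=> k; rewrite -!apply_atE; apply: functional_extensionality_dep => i.
by rewrite !apply_at0.
Qed.

Lemma Mrel_pow (C : comRingType) n d k0 (v : tensor C n d) (D : 'M[C]_d) :
  Mrel k0 v D -> forall i, Mrel k0 v (D ^+ i).
Proof.
move=> HD; elim=> [|i IH]; first by rewrite expr0; apply: Mrel1.
rewrite exprSr -mulmxE; apply: Mrel_mul => //.
by rewrite mulmxE -exprSr exprS.
Qed.

Lemma Mrel_poly (C : comRingType) n d k0 (v : tensor C n d) (D : 'M[C]_d) m (c : 'I_m -> C) :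
  Mrel k0 v D -> Mrel k0 v (\sum_(i < m) c i *: D ^+ i).
Proof.
move=> HD; apply: (big_ind (Mrel k0 v)); [exact: Mrel_0 | exact: Mrel_add |].
by move=> i _; apply: Mrel_scale; apply: Mrel_pow.
Qed.

Lemma claim_a (C : numClosedFieldType) n d (k0 : 'I_n) (hk0 : nat_of_ord k0 = 0%N)
  (v : tensor C n d) :
  forall j (X : 'I_n -> 'M[C]_d),
  (forall l : 'I_n, (j < l)%N -> X l = 1%:M) ->
  (forall l, l != k0 -> Mrel k0 v (X l)) ->
  (forall l, X l \in unitmx) ->
  exists D, D \in unitmx /\ tensor_prod_apply X v = tensor_prod_apply (ek k0 D) v.
Proof.
elim=> [|j IH] X H1 H2 H3.
  exists (X k0); split => //; apply: tpa_ext => l; rewrite /ek.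
  case: eqP => [->//|lk]; apply: H1; rewrite lt0n; apply/eqP => h; apply: lk.
  by apply: val_inj; rewrite /= h hk0.
case: (ltnP j.+1 n) => hj; last first.
  apply: IH => // l jl; exfalso.
  by move: (ltn_ord l); rewrite ltnNge (leq_trans hj jl).
set k := Ordinal hj.
have kk0 : k != k0 by apply/eqP => h; move: (congr1 val h); rewrite /= hk0.
set X' := fun l => if l == k then 1%:M else X l.
have E1 : tensor_prod_apply X v = tensor_prod_apply (fun l => X' l *m ek k (X k) l) v.
  by apply: tpa_ext => l; rewrite /X' /ek; case: eqP => [->|_]; rewrite ?mul1mx ?mulmx1.
rewrite E1 (@absorb1 _ _ _ _ _ X' _ _ (H2 k kk0 k)).
apply: IH.
- move=> l jl; rewrite /X' /ek; case: eqP => [->|lk].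
    by rewrite (negbTE kk0) mulmx1.
  have lk0 : l != k0 by apply/eqP => h; move: jl; rewrite h hk0.
  rewrite (negbTE lk0) mulmx1; apply: H1.
  rewrite ltn_neqAle jl andbT; apply/eqP => h; apply: lk; apply: val_inj; by rewrite /= -h.
- move=> l lk0; rewrite /ek (negbTE lk0) mulmx1 /X'.
  by case: eqP => _; [apply: Mrel1 | apply: H2].
- move=> l; rewrite unitmx_mul /X' /ek.
  by case: eqP => _; case: eqP => _; rewrite ?unitmx1 ?H3.
Qed.

Lemma claim_b (C : comRingType) n d (k0 : 'I_n) (hk0 : nat_of_ord k0 = 0%N)
  (v : tensor C n d) (R : 'M[C]_d) : Mrel k0 v R ->
  forall m, (m < n)%N -> tensor_prod_apply (fun _ => R) v =
    tensor_prod_apply (fun l => if l == k0 then R ^+ m.+1 else if (m < l)%N then R else 1%:M) v.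
Proof.
move=> HR; elim=> [|m IH] hm.
  apply: tpa_ext => l; case: eqP => [_|lk]; first by rewrite expr1.
  suff -> : (0 < l)%N by [].
  rewrite lt0n; apply/eqP => h; apply: lk; apply: val_inj; by rewrite /= h hk0.
rewrite IH ?(ltnW hm) //.
set k := Ordinal hm.
have kk0 : k != k0 by apply/eqP => h; move: (congr1 val h); rewrite /= hk0.
set W' := fun l : 'I_n => if l == k then 1%:M
  else if l == k0 then R ^+ m.+1 else if (m < l)%N then R else 1%:M.
rewrite (@tpa_ext _ _ _ _ (fun l => W' l *m ek k R l)); last first.
  move=> l; rewrite /W' /ek; case: (eqVneq l k) => [->|lk].
    by rewrite (negbTE kk0) mul1mx /= ltnSn.
  by rewrite mulmx1.
rewrite (@absorb1 _ _ _ _ _ W' _ _ (HR k)); apply: tpa_ext => l.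
rewrite /W' /ek; case: (eqVneq l k) => [->|lk].
  by rewrite (negbTE kk0) mulmx1 /= ltnn.
case: (eqVneq l k0) => [_|lk0]; first by rewrite [RHS]exprSr mulmxE.
rewrite mulmx1; congr (if _ then _ else _).
have hl : (m.+1 != l) by apply/eqP => h; move/eqP: lk; apply; apply: val_inj; rewrite /= h.
by rewrite [RHS]ltn_neqAle hl.
Qed.

Lemma pair_to_all (C : comRingType) n d (k0 l : 'I_n) (Y : 'M[C]_d) (v : tensor C n d) :
  symmetric_tensor v -> l != k0 ->
  tensor_prod_apply (ek l Y) v = tensor_prod_apply (ek k0 Y) v -> Mrel k0 v Y.
Proof.
move=> /symP Hv lk0 E k; case: (eqVneq k k0) => [->//|kk0].
have := congr1 (ptens (tperm l k)) E; rewrite !tpa_perm Hv.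
rewrite (@tpa_ext _ _ _ _ (ek k Y)); last by move=> x; rewrite ek_perm tpermL.
rewrite (@tpa_ext _ _ _ (fun x => ek k0 Y _) (ek k0 Y)) //.
by move=> x; rewrite ek_perm tpermD // eq_sym.
Qed.

Lemma step1 (C : numClosedFieldType) n d (A : 'I_n -> 'M[C]_d) (HA : forall k, A k \in unitmx)
  (psi : tensor C n d) (Hpsi : symmetric_tensor psi)
  (Hphi : symmetric_tensor (tensor_prod_apply A psi)) (k0 k : 'I_n) :
  k != k0 ->
  tensor_prod_apply (ek k (invmx (A k0) *m A k)) psi =
  tensor_prod_apply (ek k0 (invmx (A k0) *m A k)) psi.
Proof.
move=> kk0; move/symP: Hpsi => Hp.
move/symP: Hphi => /(_ (tperm k0 k)); rewrite tpa_perm Hp tpermV => E.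
have Epsi : psi = tensor_prod_apply (fun l => invmx (A l)) (tensor_prod_apply A psi).
  by rewrite tpa_comp (@tpa_ext _ _ _ _ (fun _ => 1%:M)) ?tpa_id // => l; rewrite mulVmx.
rewrite {1}Epsi -E !tpa_comp; apply: tpa_ext => l.
case: (eqVneq l k) => [->|lk].
  by rewrite tpermR /ek eqxx (negbTE kk0) mulmxK // mulVmx.
case: (eqVneq l k0) => [->|lk0].
  by rewrite tpermL /ek eqxx eq_sym (negbTE kk0) mul1mx.
by rewrite tpermD 1?eq_sym // /ek (negbTE lk) (negbTE lk0) mul1mx mulVmx.
Qed.

Lemma conj_sym (C : numClosedFieldType) n d (k0 : 'I_n) (G B : 'M[C]_d) (w : tensor C n d) :
  G \in unitmx -> symmetric_tensor (tensor_prod_apply (ek k0 B) w) ->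
  symmetric_tensor (tensor_prod_apply (ek k0 (G *m B *m invmx G))
                      (tensor_prod_apply (fun _ => G) w)).
Proof.
move=> uG H; rewrite tpa_comp.
rewrite (@tpa_ext _ _ _ _ (fun l => G *m ek k0 B l)); last first.
  by move=> l; rewrite /ek; case: eqP => _; rewrite ?mulmxKV ?mul1mx ?mulmx1.
by rewrite -tpa_comp; apply: const_sym.
Qed.

Theorem mainTheorem9 (C : numClosedFieldType) (n d : nat) (hn : (1 < n)%N)
    (psi phi : tensor C n d)
    (Hpsi : symmetric_tensor psi) (Hphi : symmetric_tensor phi)
    (A : 'I_n -> 'M[C]_d) (HA : forall k, A k \in unitmx)
    (Hmap : tensor_prod_apply A psi = phi) :
  exists Am : 'M[C]_d,
    Am \in unitmx /\
    (forall B : 'M[C]_d,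
        symmetric_tensor (apply_at (Ordinal (ltnW hn)) B psi) ->
        symmetric_tensor (apply_at (Ordinal (ltnW hn)) (Am *m B *m invmx Am) phi)) /\
    (forall B' : 'M[C]_d,
        symmetric_tensor (apply_at (Ordinal (ltnW hn)) B' phi) ->
        symmetric_tensor (apply_at (Ordinal (ltnW hn)) (invmx Am *m B' *m Am) psi)).
Proof.
set k0 := Ordinal (ltnW hn).
have hk0 : nat_of_ord k0 = 0%N by [].
have n0 : (0 < n)%N := ltnW hn.
have Hphi' : symmetric_tensor (tensor_prod_apply A psi) by rewrite Hmap.
set Cm := fun l => invmx (A k0) *m A l.
have HC : forall l, l != k0 -> Mrel k0 psi (Cm l).
  move=> l lk0; apply: (@pair_to_all _ _ _ k0 l _ psi Hpsi lk0).
  exact: step1.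
have unitC : forall l, Cm l \in unitmx by move=> l; rewrite unitmx_mul unitmx_inv !HA.
have vac : forall l : 'I_n, (n < l)%N -> Cm l = 1%:M.
  by move=> l hl; move: (ltn_trans hl (ltn_ord l)); rewrite ltnn.
have [D [uD ED]] := @claim_a C n d k0 hk0 psi n Cm vac HC unitC.
have Ephi : phi = tensor_prod_apply (fun _ => A k0) (tensor_prod_apply (ek k0 D) psi).
  by rewrite -ED tpa_comp -Hmap; apply: tpa_ext => l; rewrite /Cm mulKVmx.
have symw : symmetric_tensor (tensor_prod_apply (ek k0 D) psi).
  have -> : tensor_prod_apply (ek k0 D) psi =
            tensor_prod_apply (fun _ => invmx (A k0)) phi.
    rewrite Ephi tpa_comp [RHS](@tpa_ext _ _ _ _ (fun _ => 1%:M)) ?tpa_id //.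
    by move=> l; rewrite mulVmx.
  exact: const_sym.
have MD : Mrel k0 psi D := (@symE C n d k0 D psi Hpsi).1 symw.
have [R [RD [m [c ER]]]] := @mx_nroot C n d D n0 uD.
have MR : Mrel k0 psi R by rewrite ER; apply: Mrel_poly.
have ER2 : tensor_prod_apply (fun _ => R) psi = tensor_prod_apply (ek k0 D) psi.
  rewrite (@claim_b C n d k0 hk0 psi R MR n.-1); last by rewrite prednK.
  apply: tpa_ext => l; rewrite /ek; case: eqP => _; first by rewrite prednK // RD.
  by rewrite ltnNge -ltnS prednK // ltn_ord.
have uR : R \in unitmx.
  move: uD; rewrite -RD -(prednK n0) exprS -mulmxE unitmx_mul.
  by case/andP.
set Am := A k0 *m R.
have HAm : tensor_prod_apply (fun _ => Am) psi = phi by rewrite Ephi -ER2 tpa_comp.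
have uAm : Am \in unitmx by rewrite unitmx_mul HA uR.
exists Am; split => //; split.
  move=> B; rewrite !apply_atE -HAm => HB.
  exact: conj_sym.
move=> B'; rewrite !apply_atE => HB'.
have -> : psi = tensor_prod_apply (fun _ => invmx Am) phi.
  rewrite -HAm tpa_comp (@tpa_ext _ _ _ _ (fun _ => 1%:M)) ?tpa_id //.
  by move=> l; rewrite mulVmx.
have := @conj_sym C n d k0 (invmx Am) B' phi; rewrite invmxK.
apply => //; by rewrite unitmx_inv.
Qed.
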